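(* Suppose the e-values are valid, i.e. $\mathbb{E}[e_t\mid\mathcal{F}_{t-1}]\le1$ a.s. whenever $\theta_t=0$. If the $\mathcal{F}_{t-1}$-measurable testing levels satisfy, almost surely for every $t\ge1$, $$\widehat{\mathrm{FDP}}^{\mathrm{LORD}}_{\mathrm{e}}(t):=\sum_{j=1}^t\frac{\alpha_j}{R_{j-1}+1}\le\alpha,$$ then $\mathrm{FDR}(t)\le\alpha$ for all $t\ge1$.
   Context: Let $\alpha\in(0,1)$ be a target level. Hypotheses are indexed by $t=1,2,\dots$; $\theta_t\in\{0,1\}$ is a fixed (non-random) indicator with $\theta_t=0$ iff the $t$-th null hypothesis is true. $e_1,e_2,\dots$ are nonnegative random variables (e-values). Testing levels $\alpha_1,\alpha_2,\dots$ are nonnegative random variables and the decisions are $\delta_t=\mathbb{1}\{e_t\ge 1/\alpha_t\}$ (with $\delta_t=0$ when $\alpha_t=0$). Let $\mathcal{F}_t=\sigma(\delta_1,\dots,\delta_t)$, $\mathcal{F}_0$ trivial; each $\alpha_t$ is required to be $\mathcal{F}_{t-1}$-measurable. $R_t=\sum_{j=1}^t\delta_j$, $R_0=0$. $\mathcal{H}_0(t)=\{j\le t:\theta_j=0\}$. $\mathrm{FDR}(t)=\mathbb{E}\big[\sum_{j\in\mathcal{H}_0(t)}\delta_j/(R_t\vee 1)\big]$. *)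

(* Defs.v *)
From HB Require Import structures.
From mathcomp Require Import all_boot all_order all_algebra.
From mathcomp Require Import all_classical all_reals all_analysis.
Set Implicit Arguments. Unset Strict Implicit. Unset Printing Implicit Defensive.
Import Order.TTheory GRing.Theory Num.Theory.
Local Open Scope classical_set_scope.
Local Open Scope ring_scope.

(* Hypotheses are indexed t = 1, 2, ...; index 0 of the sequences is unused. *)

Section Defs.
Context {d : measure_display} {T : measurableType d} {R : realType}.

(* delta_t = 1{ e_t >= 1/alpha_t }, with delta_t = 0 when alpha_t = 0 *)
Definition decision (e alpha : nat -> T -> R) (t : nat) (w : T) : bool :=
  (0 < alpha t w) && ((alpha t w)^-1 <= e t w).

Definition nrej (e alpha : nat -> T -> R) (t : nat) (w : T) : R :=
  \sum_(1 <= j < t.+1) (decision e alpha j w)%:R.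

Definition decvec (e alpha : nat -> T -> R) (t : nat) (w : T) : {ffun 'I_t -> bool} :=
  [ffun i : 'I_t => decision e alpha (nat_of_ord i).+1 w].

(* F_t = sigma(delta_1, ..., delta_t): since the delta_j are {0,1}-valued, this
   sigma-algebra is exactly the family of preimages of subsets of {0,1}^t.
   F_0 is the trivial sigma-algebra {emptyset, T}. *)
Definition filtration (e alpha : nat -> T -> R) (t : nat) : set (set T) :=
  [set A | exists B : set {ffun 'I_t -> bool}, A = decvec e alpha t @^-1` B].

Definition filt_measurable (e alpha : nat -> T -> R) (t : nat) (X : T -> R) : Prop :=
  forall B : set R, measurable B -> filtration e alpha t (X @^-1` B).

(* E[X | F_t] <= 1 a.s., for a nonnegative X, expressed by the defining property
   of conditional expectation: E[X 1_A] <= P(A) for every A in F_t. *)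
Definition cond_exp_le1 (P : probability T R) (e alpha : nat -> T -> R)
    (t : nat) (X : T -> R) : Prop :=
  forall A, filtration e alpha t A -> (\int[P]_(w in A) (X w)%:E <= P A)%E.

Definition FDPhat_LORD (e alpha : nat -> T -> R) (t : nat) (w : T) : R :=
  \sum_(1 <= j < t.+1) alpha j w / (nrej e alpha j.-1 w + 1).

(* false discovery proportion at time t; theta j = false iff H_j is a true null *)
Definition FDP (theta : nat -> bool) (e alpha : nat -> T -> R) (t : nat) (w : T) : R :=
  (\sum_(1 <= j < t.+1 | ~~ theta j) (decision e alpha j w)%:R)
    / Num.max (nrej e alpha t w) 1.

Definition FDR (P : probability T R) (theta : nat -> bool) (e alpha : nat -> T -> R)
    (t : nat) : \bar R :=
  'E_P[FDP theta e alpha t].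

End Defs.

(* Main.v *)
Require Import Defs.
From HB Require Import structures.
From mathcomp Require Import all_boot all_order all_algebra.
From mathcomp Require Import all_classical all_reals all_analysis.
From mathcomp Require Import measurable_realfun.
Import Order.TTheory GRing.Theory Num.Theory.
Local Open Scope classical_set_scope.
Local Open Scope ring_scope.

Section Helpers.
Context {d : measure_display} {T : measurableType d} {R : realType}.
Context (e alpha : nat -> T -> R).

Lemma dec_alt j w : decision e alpha j w =
  (0 < alpha j w) && (1 <= alpha j w * e j w).
Proof.
rewrite /decision; have [a0|] := ltP 0 (alpha j w) => //=.
by rewrite -[(alpha j w)^-1]mulr1 ler_pdivrMl.
Qed.

Lemma mdec (me : forall t, measurable_fun setT (e t))
  (ma : forall t, measurable_fun setT (alpha t)) j :
  measurable_fun setT (decision e alpha j).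
Proof.
rewrite (_ : decision e alpha j = fun w => (0 < alpha j w) && (1 <= alpha j w * e j w)).
  apply: measurable_and.
    by apply: measurable_fun_ltr => //; exact: measurable_cst.
  apply: measurable_fun_ler; first exact: measurable_cst.
  exact: measurable_funM.
by apply/funext => w; rewrite dec_alt.
Qed.

Lemma mdecR (me : forall t, measurable_fun setT (e t))
  (ma : forall t, measurable_fun setT (alpha t)) j :
  measurable_fun setT (fun w => (decision e alpha j w)%:R : R).
Proof.
rewrite (_ : (fun w => _) = fun w => if decision e alpha j w then 1 else 0).
  apply: measurable_fun_ifT; [exact: mdec|exact: measurable_cst|exact: measurable_cst].
by apply/funext => w; case: (decision _ _ _ _).
Qed.

Lemma matom (me : forall t, measurable_fun setT (e t))
  (ma : forall t, measurable_fun setT (alpha t)) n v :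
  measurable (decvec e alpha n @^-1` [set v]).
Proof.
rewrite (_ : _ @^-1` _ = \bigcap_(i in [set: 'I_n]) (decision e alpha i.+1 @^-1` [set v i])).
  apply: fin_bigcap_measurable; first exact: finite_finset.
  move=> i _; rewrite -[X in measurable X]setTI; apply: mdec => //.
apply/seteqP; split => w /=.
  by move=> <- i _; rewrite /= ffunE.
by move=> H; apply/ffunP => i; rewrite ffunE; exact: H.
Qed.

Lemma factor_meas (me : forall t, measurable_fun setT (e t))
  (ma : forall t, measurable_fun setT (alpha t)) n (f : T -> R) :
  (forall w w', decvec e alpha n w = decvec e alpha n w' -> f w = f w') ->
  measurable_fun setT f.
Proof.
move=> hf _ B mB; rewrite setTI.
rewrite (_ : f @^-1` B = \bigcup_(v in [set v | exists w, decvec e alpha n w = v /\ B (f w)])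
   (decvec e alpha n @^-1` [set v])).
  apply: fin_bigcup_measurable; first exact: finite_finset.
  by move=> v _; exact: matom.
apply/seteqP; split => w /=.
  by move=> Bw; exists (decvec e alpha n w) => //; exists w.
by move=> [v [w' [<- Bw']] /= ew]; rewrite (hf _ _ ew).
Qed.

End Helpers.

Section Key.
Context {d : measure_display} {T : measurableType d} {R : realType}.
Context (e alpha : nat -> T -> R).
Local Open Scope ereal_scope.

Lemma key (P : probability T R) (me : forall t, measurable_fun setT (e t))
  (ma : forall t, measurable_fun setT (alpha t)) n (X Y : T -> R) :
  measurable_fun setT X -> (forall w, (0 <= X w)%R) -> (forall w, (0 <= Y w)%R) ->
  (forall w w', decvec e alpha n w = decvec e alpha n w' -> Y w = Y w') ->
  cond_exp_le1 P e alpha n X ->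
  \int[P]_w ((Y w * X w)%R%:E) <= \int[P]_w (Y w)%:E.
Proof.
move=> mX X0 Y0 hY hc.
pose A := fun v => decvec e alpha n @^-1` [set v].
have mA v : measurable (A v) by exact: matom.
have U : [set: T] = \big[setU/set0]_(v <- enum {ffun 'I_n -> bool}) A v.
  rewrite -bigcup_seq; apply/seteqP; split => w // _.
  by exists (decvec e alpha n w) => //=; rewrite mem_enum.
have tA : trivIset [set` enum {ffun 'I_n -> bool}] A.
  by move=> i j _ _ [w [/= <- <-]].
have mY : measurable_fun setT Y by exact: (@factor_meas _ _ _ e alpha me ma n Y hY).
have mYX : measurable_fun setT (fun w => (Y w * X w)%R%:E).
  by apply: measurableT_comp => //; exact: measurable_funM.
have mYE : measurable_fun setT (fun w => (Y w)%:E).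
  by apply: measurableT_comp.
rewrite U (ge0_integral_bigsetU _ mA) ?enum_uniq //; last 2 first.
- by rewrite -U.
- by move=> x _; rewrite lee_fin mulr_ge0.
rewrite (ge0_integral_bigsetU _ mA) ?enum_uniq //; last 2 first.
- by rewrite -U.
- by move=> x _; rewrite lee_fin.
apply: lee_sum => v _.
have [[w0 Aw0]|nA] := pselect (exists w0, A v w0); last first.
  have -> : A v = set0 by apply/seteqP; split => w // Aw; apply: nA; exists w.
  by rewrite !integral_set0.
rewrite (eq_integral (fun x => (Y w0)%:E * (X x)%:E)); last first.
  move=> x /[!inE] Ax.
  have -> : Y x = Y w0 by apply: hY; rewrite /A /= in Ax Aw0; rewrite Ax Aw0.
  by rewrite EFinM.
rewrite [X in _ <= X](eq_integral (cst (Y w0)%:E)); last first.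
  move=> x /[!inE] Ax.
  have -> : Y x = Y w0 by apply: hY; rewrite /A /= in Ax Aw0; rewrite Ax Aw0.
  by [].
rewrite integral_cst // ge0_integralZl_EFin //; last 2 first.
- by move=> x _; rewrite lee_fin.
- by apply: measurableT_comp => //; exact: measurable_funS mX.
apply: lee_wpmul2l; first by rewrite lee_fin.
by apply: hc; exists [set v].
Qed.

End Key.

Section Main.
Context {d : measure_display} {T : measurableType d} {R : realType}.
Context (e alpha : nat -> T -> R).

Lemma nrej_vec n w : nrej e alpha n w = \sum_(i < n) (decvec e alpha n w i)%:R.
Proof.
under [RHS]eq_bigr => i _ do rewrite ffunE.
by rewrite /nrej big_add1 /= big_mkord.
Qed.

Lemma nrej_ge0 n w : 0 <= nrej e alpha n w.
Proof. by rewrite /nrej sumr_ge0. Qed.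

Lemma nrej_split j t w : (1 <= j <= t)%N ->
  nrej e alpha j.-1 w + (decision e alpha j w)%:R <= nrej e alpha t w.
Proof.
move=> /andP[j1 jt]; rewrite /nrej (@big_cat_nat _ _ _ j _ _ _ _ j1 (leqW jt)) /=.
rewrite prednK // lerD2l (@big_ltn _ _ _ j) ?ltnS // lerDl.
by rewrite sumr_ge0.
Qed.

Lemma fdp_bound theta t w (a0 : forall j w, 0 <= alpha j w) (e0 : forall j w, 0 <= e j w) :
  FDP theta e alpha t w <= \sum_(1 <= j < t.+1)
    (if theta j then 0 else alpha j w / (nrej e alpha j.-1 w + 1) * e j w).
Proof.
rewrite /FDP big_mkcond /= mulr_suml big_seq [leRHS]big_seq.
apply: ler_sum => j; rewrite mem_index_iota => jr.
case: (theta j) => /=; first by rewrite mul0r.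
have Y0 : 0 <= alpha j w / (nrej e alpha j.-1 w + 1) * e j w.
  by rewrite mulr_ge0 // divr_ge0 // addr_ge0 // nrej_ge0.
case D: (decision e alpha j w) => /=; last by rewrite mul0r.
have := D; rewrite dec_alt => /andP[ap ae].
have hs := @nrej_split j t w jr; rewrite D /= in hs.
set N := nrej e alpha j.-1 w in hs *.
have N1 : 0 < N + 1 by rewrite ltr_wpDl // nrej_ge0.
have NM : N + 1 <= Num.max (nrej e alpha t w) 1 by rewrite le_max hs.
rewrite mul1r (@le_trans _ _ ((N + 1)^-1)) //.
  by rewrite lef_pV2 ?posrE // (lt_le_trans N1).
rewrite mulrAC -[leLHS]mul1r ler_wpM2r // invr_ge0 ltW //.
Qed.

End Main.

Theorem proposition1 (d : measure_display) (T : measurableType d) (R : realType)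
  (P : probability T R) (a : R) (theta : nat -> bool) (e alpha : nat -> T -> R) :
  0 < a < 1 ->
  (forall t, measurable_fun setT (e t)) ->
  (forall t w, 0 <= e t w) ->
  (forall t, measurable_fun setT (alpha t)) ->
  (forall t w, 0 <= alpha t w) ->
  (forall t, (1 <= t)%N -> filt_measurable e alpha t.-1 (alpha t)) ->
  (forall t, (1 <= t)%N -> theta t = false -> cond_exp_le1 P e alpha t.-1 (e t)) ->
  {ae P, forall w, forall t, (1 <= t)%N -> FDPhat_LORD e alpha t w <= a} ->
  forall t, (1 <= t)%N -> (FDR P theta e alpha t <= a%:E)%E.
Proof.
move=> /andP[a0 a1] me e0 ma a0' fm ce hae t t1.
pose Y j w := alpha j w / (nrej e alpha j.-1 w + 1).
pose Z j w := if theta j then 0 else Y j w * e j w.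
have Y0 j w : 0 <= Y j w by rewrite divr_ge0 // addr_ge0 // nrej_ge0.
have Z0 j w : 0 <= Z j w by rewrite /Z; case: (theta j) => //; rewrite mulr_ge0.
have nrejf n : forall w w', decvec e alpha n w = decvec e alpha n w' ->
    nrej e alpha n w = nrej e alpha n w'.
  by move=> w w' h; rewrite !nrej_vec h.
have mY j : measurable_fun setT (Y j).
  apply: (measurable_funM (ma j)).
  apply: (@factor_meas _ _ _ e alpha me ma j.-1) => w w' h.
  by rewrite (nrejf _ _ _ h).
have mZ j : measurable_fun setT (Z j).
  rewrite /Z; case: (theta j); first exact: measurable_cst.
  exact: measurable_funM.
have mFDP : measurable_fun setT (FDP theta e alpha t).
  apply: measurable_funM.
    rewrite (_ : (fun w => _) = fun w => \sum_(j <- index_iota 1 t.+1)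
       (if ~~ theta j then (decision e alpha j w)%:R else 0)); last first.
      by apply/funext => w; rewrite big_mkcond.
    apply: measurable_sum => j; case: (theta j) => /=; first exact: measurable_cst.
    exact: mdecR.
  apply: (@factor_meas _ _ _ e alpha me ma t) => w w' h.
  by rewrite (nrejf _ _ _ h).
rewrite /FDR unlock.
apply: (@le_trans _ _ (\int[P]_w (\sum_(1 <= j < t.+1) Z j w)%:E)%E).
  apply: ge0_le_integral => //.
  - move=> w _; rewrite lee_fin /FDP divr_ge0 //; last by rewrite le_max ler01 orbT.
    by rewrite sumr_ge0.
  - exact: measurableT_comp.
  - by apply: measurableT_comp => //; exact: measurable_sum.
  - by move=> w _; rewrite lee_fin; exact: fdp_bound.
under eq_integral => w _ do rewrite -sumEFin.
rewrite ge0_integral_sum //; last 2 first.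
- by move=> j; exact: measurableT_comp.
- by move=> j w _; rewrite lee_fin.
apply: (@le_trans _ _ (\sum_(1 <= j < t.+1) \int[P]_w (Y j w)%:E)%E).
  rewrite big_seq [leRHS]big_seq; apply: lee_sum => j; rewrite mem_index_iota => /andP[j1 _].
  rewrite /Z; case th: (theta j).
    rewrite (eq_integral (cst 0%E)) // integral0.
    by apply: integral_ge0 => w _; rewrite lee_fin.
  apply: (@key _ _ _ e alpha P me ma j.-1) => //; last exact: ce.
  move=> w w' h; rewrite /Y (nrejf _ _ _ h); congr (_ / _).
  have [B hB] := fm j j1 [set alpha j w] (measurable_set1 _).
  have : (alpha j @^-1` [set alpha j w]) w by [].
  rewrite hB /= => Bw.
  have : (alpha j @^-1` [set alpha j w]) w' by rewrite hB /= -h.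
  by move=> /= ->.
rewrite -ge0_integral_sum //; last 2 first.
- by move=> j; exact: measurableT_comp.
- by move=> j w _; rewrite lee_fin.
under eq_integral => w _ do rewrite sumEFin.
apply: (@le_trans _ _ (\int[P]_w (cst a%:E) w)%E).
  apply: ae_ge0_le_integral => //.
  - by move=> w _; rewrite lee_fin sumr_ge0.
  - by apply: measurableT_comp => //; exact: measurable_sum.
  - by move=> w _; rewrite lee_fin ltW.
  - by move: hae; apply: filterS => w H _; rewrite lee_fin; exact: (H t t1).
rewrite integral_cst //.
by have := probability_setT P; move=> /= ->; rewrite mule1.
Qed.
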